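(* Let $\ell\geq 1$ be an integer. For $\kappa\in\{1,\ldots,\ell+1\}$ let $A^{[\kappa]}\in M_\ell(\mathbb{R})$ be the matrix obtained from the $\ell\times(\ell+1)$ matrix with entries $\big((i-1)(\ell+1)+j\big)^{\ell-1}$ ($1\leq i\leq \ell$, $1\leq j\leq \ell+1$) by deleting its $\kappa$-th column; equivalently $(A^{[\kappa]})_{ij}=\big((i-1)(\ell+1)+r^{[\kappa]}_j\big)^{\ell-1}$ with $r^{[\kappa]}_j=j$ for $1\leq j\leq\kappa-1$ and $r^{[\kappa]}_j=j+1$ for $\kappa\leq j\leq \ell$. Then there exists a number $\sigma_\ell$ depending only on $\ell$ such that for all $\kappa\in\{1,\ldots,\ell+1\}$ \[ \det(A^{[\kappa]})=(-1)^\ell\sigma_\ell\binom{\ell}{\kappa-1}. \] *)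

(* Defs.v *)
From mathcomp Require Import all_boot all_order all_algebra.
From mathcomp Require Import reals.
Set Implicit Arguments. Unset Strict Implicit. Unset Printing Implicit Defensive.
Import Order.TTheory GRing.Theory Num.Theory.
Local Open Scope ring_scope.

(* 0-indexed column selector: for k = kappa-1, column j (0-indexed) of A^[kappa]
   is column r j of the full l x (l+1) matrix, r j = j if j < k, j+1 otherwise. *)
Definition rcol (k j : nat) : nat := if (j < k)%N then j else j.+1.

(* A^[kappa] with k = kappa - 1 in {0..l}; entries ((i-1)(l+1)+r_j)^(l-1)
   in 1-indexed form, i.e. (i*(l+1) + rcol k j + 1)^(l-1) 0-indexed. *)
Definition Akappa (R : realType) (l k : nat) : 'M[R]_l :=
  \matrix_(i < l, j < l) (((i * l.+1 + rcol k j).+1)%:R ^+ l.-1).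

(* Main.v *)
Require Import Defs.
From mathcomp Require Import all_boot all_order all_algebra.
From mathcomp Require Import reals ring zify.
Import Order.TTheory GRing.Theory Num.Theory.
Local Open Scope ring_scope.

Lemma fd (R : comPzRingType) (n : nat) : forall m (x : R), (m < n)%N ->
  \sum_(c < n.+1) (-1) ^+ c * ('C(n, c))%:R * (x + c%:R) ^+ m = 0.
Proof.
elim: n => [//|n IHn] m; elim: m => [|m IHm] x hm.
  have := exprBn (1 : R) 1 n.+1; rewrite subrr expr0n /= => /esym E.
  rewrite -[RHS]E; apply: eq_bigr => i _.
  by rewrite !expr1n !mulr1 mulr_natr.
under eq_bigr => c _ do rewrite exprSr !mulrDr !mulrA.
rewrite big_split /= -mulr_suml IHm ?mul0r ?add0r; last exact: ltnW.
rewrite big_ord_recl /= mulr0 add0r.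
have B : forall i, bump 0 i = i.+1 by [].
under eq_bigr => i _ do rewrite B.
transitivity (- ((n.+1)%:R * \sum_(i < n.+1) (-1) ^+ i * ('C(n, i))%:R * (x + 1 + i%:R) ^+ m)); last first.
  by rewrite IHn ?mulr0 ?oppr0.
rewrite mulr_sumr -sumrN; apply: eq_bigr => i _.
rewrite exprS mulN1r !mulNr; congr (- _).
have -> : (x + i.+1%:R) = x + 1 + i%:R by rewrite -natr1 (addrC _ 1) addrA.
have H : 'C(n.+1, i.+1)%:R * i.+1%:R = n.+1%:R * 'C(n, i)%:R :> R.
  by rewrite -!natrM mulnC -mul_bin_diag.
by rewrite mulrAC -(mulrA _ _ (i.+1)%:R) H; ring.
Qed.

Lemma rcol_eq k j : j != k -> rcol k.+1 j = rcol k j.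
Proof. rewrite /rcol => /eqP h; case: (ltnP j k) => h1; case: (ltnP j k.+1) => h2 //; lia. Qed.

Lemma detN_gen (R : comPzRingType) n (T : 'M[R]_n) (N : 'M[R]_n) k0 :
  (forall i j, j != k0 -> N i j = T i j) -> \det N = \sum_i N i k0 * cofactor T i k0.
Proof.
  move=> HN; rewrite (expand_det_col N k0); apply: eq_bigr => i _; congr (_ * _).
  rewrite /cofactor; congr (_ * \det _); apply/matrixP => a b; rewrite !mxE.
  by apply: HN; rewrite eq_sym neq_lift.
Qed.

Lemma step (R : realType) l k (hk : (k < l)%N) :
  'C(l,k)%:R * \det (Akappa R l k.+1) = 'C(l,k.+1)%:R * \det (Akappa R l k).
Proof.
set T := Akappa R l k.+1.
pose k0 := Ordinal hk.
pose cof i := cofactor T i k0.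
have detN := @detN_gen R l T ^~ k0.
pose w (c : nat) (i : 'I_l) : R := ((i * l.+1 + c).+1)%:R ^+ l.-1.
pose NN c := \matrix_(i, j) if j == k0 then w c i else T i j.
have HN c : \det (NN c) = \sum_i w c i * cof i.
  by rewrite detN => [|i j /negbTE]; [apply: eq_bigr => i _; rewrite mxE eqxx | rewrite mxE => ->].
have Hsum : \sum_(c < l.+1) (-1)^+c * ('C(l,c))%:R * \det (NN c) = 0.
  under eq_bigr => c _ do rewrite HN mulr_sumr.
  rewrite exchange_big /=; apply: big1 => i _.
  under eq_bigr => c _ do rewrite mulrA.
  rewrite -mulr_suml -[RHS](mul0r (cof i)); congr (_ * _).
  rewrite -[RHS](@fd R l l.-1 ((i * l.+1).+1)%:R); last by lia.
  by apply: eq_bigr => c _; rewrite /w -natrD addSn.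
have hk1 : (k < l.+1)%N by lia.
have hk2 : (k.+1 < l.+1)%N by lia.
pose ck : 'I_l.+1 := Ordinal hk1.
pose ck1 : 'I_l.+1 := Ordinal hk2.
have E1 : \det (NN k) = \det T.
  congr (\det _); apply/matrixP => i j; rewrite mxE; case: eqP => // ->.
  by rewrite /T /Akappa mxE /rcol /= ltnSn.
have E2 : \det (NN k.+1) = \det (Akappa R l k).
  congr (\det _); apply/matrixP => i j; rewrite mxE; case: eqP => [->|/eqP hj].
    by rewrite /Akappa mxE /rcol /= ltnn.
  by rewrite /T /Akappa !mxE rcol_eq.
have E0 : forall c : 'I_l.+1, c != ck -> c != ck1 -> \det (NN c) = 0.
  move=> c h1 h2.
  have hc1 : (nat_of_ord c != k) by [].
  have hc2 : (nat_of_ord c != k.+1) by [].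
  have hj : ((if (c < k)%N then nat_of_ord c else (nat_of_ord c).-1) < l)%N.
    have := ltn_ord c; case: ifP => hh; lia.
  pose j0 : 'I_l := Ordinal hj.
  rewrite -det_tr; apply: (@determinant_alternate _ _ _ k0 j0).
    rewrite /j0 /k0; apply/eqP => /(congr1 val) /=; case: ifP => _; lia.
  move=> i; rewrite !mxE eqxx.
  have -> : (j0 == k0) = false.
    apply/eqP => /(congr1 val) /=; case: ifP => _; lia.
  have -> : rcol k.+1 j0 = c by rewrite /rcol /=; case: (ltnP c k) => ha /=; case: ifP => hb; lia.
  by [].
have Z : \sum_(i < l.+1 | (i != ck) && (i != ck1)) (-1)^+i * ('C(l,i))%:R * \det (NN i) = 0.
  by apply: big1 => c /andP [h1 h2]; rewrite E0 ?mulr0.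
move: Hsum; rewrite (bigD1 ck) //= (bigD1 ck1) //=.
rewrite [X in _ + (_ + X)](eq_bigr (fun _ => 0)); last first.
  by move=> c /andP [h1 h2]; rewrite E0 ?mulr0.
rewrite big1_eq addr0 E1 E2 exprS mulN1r !mulNr => /eqP.
rewrite subr_eq0 -!mulrA => /eqP /(mulfI _).
  by apply; rewrite signr_eq0.
by apply/eqP => /(congr1 val) /=; lia.
Qed.

Lemma closed (R : realType) l k : (k <= l)%N ->
  \det (Akappa R l k) = 'C(l,k)%:R * \det (Akappa R l 0).
Proof.
elim: k => [|k IH] hk; first by rewrite bin0 mul1r.
have := @step R l k hk; rewrite IH ?(ltnW hk) // mulrA (mulrC 'C(l, k.+1)%:R) -mulrA.
apply: mulfI; rewrite pnatr_eq0 -lt0n bin_gt0; exact: ltnW.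
Qed.

Theorem proposition3 (R : realType) (l : nat) (hl : (1 <= l)%N) :
  exists sigma : R, forall k : 'I_l.+1,
    \det (Akappa R l k) = (-1) ^+ l * sigma * ('C(l, k))%:R.
Proof.
exists ((-1) ^+ l * \det (Akappa R l 0)) => k.
rewrite closed; last by rewrite -ltnS.
by rewrite mulrA -exprD addnn -mul2n exprM sqrrN expr1n expr1n mul1r mulrC.
Qed.
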